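(* Let $M$ be a matroid, let $\mathcal{T}$ be a tangle of $M$, let $X\subseteq E(M)$ be independent in the tangle matroid $M(\mathcal{T})$, and let $e\in X$. Then $X\setminus e$ is independent in the tangle matroid $(M\setminus e)(\mathcal{T}')$, where $\mathcal{T}'$ is the tangle of $M\setminus e$ inherited from $\mathcal{T}$.
   Context: $\lambda_M(X) = \rank_M(X) + \rank_M(E(M)\setminus X) - \rank(M)$. A tangle of order $\theta$ of $M$ is a collection $\mathcal{T}$ of subsets of $E(M)$ such that: (i) $\lambda_M(X)<\theta$ for all $X\in\mathcal{T}$; (ii) for every $X\subseteq E(M)$ with $\lambda_M(X)<\theta$, either $X\in\mathcal{T}$ or $E(M)\setminus X\in\mathcal{T}$; (iii) if $X,Y,Z\in\mathcal{T}$ then $X\cup Y\cup Z\neq E(M)$; (iv) $E(M)\setminus\{e\}\notin\mathcal{T}$ for every $e\in E(M)$. The tangle matroid $M(\mathcal{T})$ has rank function $\rank_{\mathcal{T}}(X) = \min\{\lambda_M(Y): X\subseteq Y\in\mathcal{T}\}$ if some member of $\mathcal{T}$ contains $X$, and $\theta$ otherwise. For a minor $N$ of $M$ with $S=E(M)\setminus E(N)$, the tangle of $N$ inherited from $\mathcal{T}$ is $\{X\setminus S: X\in\mathcal{T},\ \lambda_N(X\setminus S)<\theta-|S|\}$, a tangle of $N$ of order $\theta-|S|$. *)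

(* Defs.v *)
From mathcomp Require Import all_boot.
Set Implicit Arguments. Unset Strict Implicit. Unset Printing Implicit Defensive.

Definition is_matroid (T : finType) (E : {set T}) (r : {set T} -> nat) : Prop :=
  [/\ forall X : {set T}, X \subset E -> r X <= #|X|,
      forall X Y : {set T}, X \subset Y -> Y \subset E -> r X <= r Y &
      forall X Y : {set T}, X \subset E -> Y \subset E ->
        r (X :|: Y) + r (X :&: Y) <= r X + r Y].

(* connectivity function lambda_M(X) = r(X) + r(E \ X) - r(E)
   (nonnegative by submodularity, so truncated subtraction is harmless) *)
Definition conn (T : finType) (E : {set T}) (r : {set T} -> nat) (X : {set T}) : nat :=
  r X + r (E :\: X) - r E.

Definition is_tangle (T : finType) (E : {set T}) (r : {set T} -> nat)
    (theta : nat) (Tg : {set {set T}}) : Prop :=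
  [/\ Tg \subset powerset E,
      forall X : {set T}, X \in Tg -> conn E r X < theta,
      forall X : {set T}, X \subset E -> conn E r X < theta -> X \in Tg \/ E :\: X \in Tg,
      forall X Y Z : {set T}, X \in Tg -> Y \in Tg -> Z \in Tg -> X :|: Y :|: Z != E &
      forall e : T, e \in E -> E :\ e \notin Tg].

Definition tangle_rank (T : finType) (E : {set T}) (r : {set T} -> nat)
    (theta : nat) (Tg : {set {set T}}) (X : {set T}) : nat :=
  if [exists Y in Tg, X \subset Y]
  then \big[minn/theta]_(Y in Tg | X \subset Y) conn E r Y
  else theta.

Definition tangle_indep (T : finType) (E : {set T}) (r : {set T} -> nat)
    (theta : nat) (Tg : {set {set T}}) (X : {set T}) : Prop :=
  X \subset E /\ tangle_rank E r theta Tg X = #|X|.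

(* tangle of N = M \ e (ground set E \ e, same rank function) inherited from Tg,
   with S = {e}; it has order theta - 1 *)
Definition inherited_tangle_del (T : finType) (E : {set T}) (r : {set T} -> nat)
    (theta : nat) (Tg : {set {set T}}) (e : T) : {set {set T}} :=
  [set X :\ e | X in Tg & conn (E :\ e) r (X :\ e) < theta - 1].

(* Main.v *)
Require Import Defs.
From mathcomp Require Import all_boot.
From mathcomp Require Import zify.
From HB Require Import structures.

HB.instance Definition _ := SemiGroup.isComLaw.Build nat minn minnA minnC.

Section Aux.
Context {T : finType} {E : {set T}} {r : {set T} -> nat} {theta : nat} {Tg : {set {set T}}}.
Hypothesis HM : is_matroid E r.
Hypothesis HT : is_tangle E r theta Tg.

Lemma bigmin_ge (P : pred {set T}) (F : {set T} -> nat) k idx :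
  k <= idx -> (forall Y, P Y -> k <= F Y) -> k <= \big[minn/idx]_(Y | P Y) F Y.
Proof.
move=> hi hF; apply: (big_ind (fun m => k <= m)) => //.
by move=> a b ha hb; rewrite leq_min ha hb.
Qed.

Lemma bigmin_le (P : pred {set T}) (F : {set T} -> nat) idx Y0 :
  P Y0 -> \big[minn/idx]_(Y | P Y) F Y <= F Y0.
Proof. by move=> h; rewrite (bigD1 Y0) //= geq_minl. Qed.

Lemma bigmin_le_idx (P : pred {set T}) (F : {set T} -> nat) idx :
  \big[minn/idx]_(Y | P Y) F Y <= idx.
Proof.
elim/big_rec: _ => // i x _ hx; by rewrite geq_min hx orbT.
Qed.

Lemma r0 : r set0 = 0.
Proof. case: HM => h _ _; have := h set0 (sub0set E); rewrite cards0; lia. Qed.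

Lemma r1 {f} : f \in E -> r [set f] <= 1.
Proof. case: HM => h _ _ fE; have := h [set f]; rewrite cards1; apply; by rewrite sub1set. Qed.

Lemma rmono {X Y : {set T}} : X \subset Y -> Y \subset E -> r X <= r Y.
Proof. by case: HM => _ h _; apply: h. Qed.

Lemma rsub {X Y : {set T}} : X \subset E -> Y \subset E -> r (X :|: Y) + r (X :&: Y) <= r X + r Y.
Proof. by case: HM => _ _ h; apply: h. Qed.

Lemma rU1 {Y : {set T}} {f} : Y \subset E -> f \in E -> r (f |: Y) <= r Y + 1.
Proof.
move=> YE fE; have := @rsub Y [set f] YE.
rewrite sub1set fE setUC => /(_ isT) h; have := r1 fE; lia.
Qed.

Lemma tg_sub {Y} : Y \in Tg -> Y \subset E.
Proof. by case: HT => h _ _ _ _ hY; move/subsetP: h => /(_ _ hY); rewrite inE. Qed.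

Lemma set1_in {f} : 2 <= theta -> f \in E -> [set f] \in Tg.
Proof.
move=> th fE; case: HT => _ _ h2 _ h4.
have sE : [set f] \subset E by rewrite sub1set.
have hc : conn E r [set f] < theta.
  rewrite /conn; have := r1 fE; have := @rmono (E :\: [set f]) E (subsetDl _ _) (subxx _).
  lia.
case: (h2 _ sE hc) => // H; by move: (h4 _ fE); rewrite H.
Qed.

Lemma grow {Y : {set T}} {f} : Y \in Tg -> f \in E -> 2 <= theta -> conn E r (f |: Y) < theta ->
  f |: Y \in Tg.
Proof.
move=> YT fE th hc; have YE := tg_sub YT.
have sE : f |: Y \subset E by rewrite subUset sub1set fE YE.
case: HT => _ _ h2 h3 _.
case: (h2 _ sE hc) => // H.
have := h3 _ _ _ YT H (set1_in th fE).
suff -> : Y :|: E :\: (f |: Y) :|: [set f] = E by rewrite eqxx.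
apply/setP => x; rewrite !inE.
case: (x =P f) => [->|_]; first by rewrite fE !orbT.
case xY: (x \in Y) => //=; first by rewrite (subsetP YE).
by rewrite ?andbT ?orbF; case: (x \in E).
Qed.

Lemma conn_U1 {Y : {set T}} {f} : Y \subset E -> f \in E -> conn E r (f |: Y) <= conn E r Y + 1.
Proof.
move=> YE fE; rewrite /conn.
have h1 := rU1 YE fE.
have h2 : r (E :\: (f |: Y)) <= r (E :\: Y).
  apply: rmono; last exact: subsetDl.
  by apply: setDS; apply: subsetUr.
lia.
Qed.

Lemma conn0 : conn E r set0 = 0.
Proof. by rewrite /conn r0 setD0; lia. Qed.

Lemma set0_in : 1 <= theta -> set0 \in Tg.
Proof.
move=> th; case: HT => _ _ h2 h3 _.
case: (h2 set0 (sub0set _)); rewrite ?conn0 // setD0 => H.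
by move: (h3 _ _ _ H H H); rewrite !setUid eqxx.
Qed.

Lemma small_rank n : forall Z : {set T}, #|Z| = n -> Z \subset E -> 2 <= theta -> n < theta ->
  exists2 Y, Y \in Tg & Z \subset Y /\ conn E r Y <= n.
Proof.
elim: n => [|n IH] Z hZ ZE th hn.
  move/eqP: hZ; rewrite cards_eq0 => /eqP ->.
  by exists set0; [apply: set0_in; lia | rewrite conn0 sub0set].
have: (0 < #|Z|) by rewrite hZ.
case/card_gt0P => f fZ.
have fE : f \in E by apply: (subsetP ZE).
have hZ' : #|Z :\ f| = n by rewrite (cardsD1 f Z) fZ in hZ; lia.
have ZE' : Z :\ f \subset E by apply: subset_trans ZE; apply: subsetDl.
case: (IH _ hZ' ZE' th (ltnW hn)) => Y YT [sZY cY].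
have YE := tg_sub YT.
have cU := conn_U1 YE fE.
exists (f |: Y); first by apply: grow => //; lia.
split; last by lia.
apply/subsetP => x xZ; rewrite !inE; case: eqP => //= xf.
apply: (subsetP sZY); rewrite !inE xZ andbT; exact/eqP.
Qed.

Lemma conn_del {Y : {set T}} {e} : Y \subset E -> e \in E ->
  conn (E :\ e) r (Y :\ e) <= conn E r Y.
Proof.
move=> YE eE; rewrite /conn.
have eq1 : (E :\ e) :\: (Y :\ e) = (E :\: Y) :\ e.
  by apply/setP => x; rewrite !inE; case: (x == e); rewrite ?andbF ?andbT.
rewrite eq1.
case eY: (e \in Y).
- have eq2 : (E :\: Y) :\ e = E :\: Y.
    apply/setP => x; rewrite !inE; case: (x =P e) => [->|]; by rewrite ?eY.
  rewrite eq2.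
  have h := @rsub Y (E :\ e) YE (subsetDl _ _).
  have eqA : Y :|: (E :\ e) = E.
    apply/setP => x; rewrite !inE; case: (x =P e) => [->|]; first by rewrite eY eE.
    move=> _ /=; case xE: (x \in E); rewrite ?orbT ?orbF //.
    by apply/negP => /(subsetP YE); rewrite xE.
  have eqB : Y :&: (E :\ e) = Y :\ e.
    apply/setP => x; rewrite !inE; case xY: (x \in Y); rewrite ?andbF //= ?andbT.
    by case: (x == e); rewrite //= (subsetP YE).
  rewrite eqA eqB in h.
  lia.
- have eq2 : Y :\ e = Y.
    apply/setP => x; rewrite !inE; case: (x =P e) => [->|]; by rewrite ?eY.
  rewrite eq2.
  have h := @rsub (E :\: Y) (E :\ e) (subsetDl _ _) (subsetDl _ _).
  have eqA : (E :\: Y) :|: (E :\ e) = E.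
    apply/setP => x; rewrite !inE; case: (x =P e) => [->|]; first by rewrite eY eE.
    by move=> _ /=; case: (x \in E); rewrite ?andbT ?andbF ?orbT.
  have eqB : (E :\: Y) :&: (E :\ e) = (E :\: Y) :\ e.
    apply/setP => x; rewrite !inE; case: (x \in E); case: (x == e); case: (x \in Y); by [].
  rewrite eqA eqB in h.
  lia.
Qed.

Lemma conn_addback {Y : {set T}} {e} : Y \subset E -> e \in E ->
  conn E r (e |: Y) <= conn (E :\ e) r (Y :\ e) + 1.
Proof.
move=> YE eE; rewrite /conn.
have W : e |: Y = e |: (Y :\ e).
  apply/setP => x; rewrite !inE; by case: (x == e).
have YE' : Y :\ e \subset E by apply: subset_trans YE; apply: subsetDl.
have h1 := rU1 YE' eE. rewrite -W in h1.
have -> : (E :\ e) :\: (Y :\ e) = E :\: (e |: Y).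
  apply/setP => x; rewrite !inE; by case: (x == e); rewrite ?andbF.
have h2 := @rmono (E :\ e) E (subsetDl _ _) (subxx _).
lia.
Qed.

End Aux.

Theorem lemma2p32 (T : finType) (E : {set T}) (r : {set T} -> nat)
    (theta : nat) (Tg : {set {set T}}) (X : {set T}) (e : T) :
  is_matroid E r ->
  is_tangle E r theta Tg ->
  tangle_indep E r theta Tg X ->
  e \in X ->
  tangle_indep (E :\ e) r (theta - 1) (inherited_tangle_del E r theta Tg e) (X :\ e).
Proof.
move=> HM HT [XE hX] eX.
have eE : e \in E by apply: (subsetP XE).
split; first by apply: setSD.
set n := #|X| in hX.
have hXe : #|X :\ e| = n.-1 by rewrite /n (cardsD1 e X) eX.
have n1 : 1 <= n by rewrite /n (cardsD1 e X) eX.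
rewrite hXe.
have nth : n <= theta.
  rewrite -hX /tangle_rank; case: ifP => // _; exact: bigmin_le_idx.
have lowW : forall W, W \in Tg -> X \subset W -> n <= conn E r W.
  move=> W WT sXW; rewrite -hX /tangle_rank.
  have -> : [exists Y in Tg, X \subset Y] by apply/existsP; exists W; rewrite WT.
  exact: bigmin_le (fun Y => (Y \in Tg) && (X \subset Y)) _ _ _ (introT andP (conj WT sXW)).
set Tg' := inherited_tangle_del E r theta Tg e.
apply/eqP; rewrite eqn_leq; apply/andP; split.
-
  rewrite /tangle_rank.
  have hle : forall b : bool, (if b then \big[minn/theta - 1]_(Y in Tg' | X :\ e \subset Y) conn (E :\ e) r Y else theta - 1) <= theta - 1.
    by case=> //; apply: bigmin_le_idx.
  case: (ltngtP n theta) => [nlt|ngt|neq]; last first.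
  - by apply: leq_trans (hle _) _; rewrite neq subn1.
  - by move: nth; rewrite leqNgt ngt.
  have th2 : 2 <= theta by lia.
  have XeE : X :\ e \subset E by apply: subset_trans XE; apply: subsetDl.
  have [Y YT [sY cY]] := small_rank HM HT n.-1 _ hXe XeE th2 ltac:(lia).
  have YE := tg_sub HT YT.
  have cd := conn_del HM YE eE.
  have Y'in : Y :\ e \in Tg'.
    apply/imsetP; exists Y => //; rewrite inE YT /=; lia.
  have sY' : X :\ e \subset Y :\ e.
    apply/subsetP => x xX; rewrite inE (subsetP sY) // andbT; by move: xX; rewrite !inE => /andP [].
  have -> : [exists Y0 in Tg', X :\ e \subset Y0] by apply/existsP; exists (Y :\ e); rewrite Y'in.
  have hb := @bigmin_le T (fun Y => (Y \in Tg') && (X :\ e \subset Y)) (conn (E :\ e) r) (theta - 1) (Y :\ e).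
  rewrite /= Y'in sY' in hb; apply: leq_trans (hb isT) _; lia.
-
  rewrite /tangle_rank; case: ifP => _; last by lia.
  apply: bigmin_ge; first by lia.
  move=> Y' /andP [] /imsetP [Y]; rewrite inE => /andP [YT cY] -> sX.
  have YE := tg_sub HT YT.
  have th2 : 2 <= theta by lia.
  have ca := conn_addback HM YE eE.
  have WT : e |: Y \in Tg by apply: (grow HM HT YT eE th2); lia.
  have sXW : X \subset e |: Y.
    apply/subsetP => x xX; rewrite !inE; case: eqP => //= xe.
    have : x \in X :\ e by rewrite !inE xX andbT; apply/eqP.
    by move/(subsetP sX); rewrite !inE => /andP [].
  have := lowW _ WT sXW; lia.
Qed.
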